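(* Let $A\in\mathcal E_n$ be nonzero with $\operatorname{rk}(A)=\operatorname{st}_+(A)=r$, Perron eigenvalue $\lambda_1$ and normalised Perron eigenvector $u$. Suppose $$A=U(\lambda_1\oplus D_1)U^T=BCB^T,$$ where $D_1$ is an $(r-1)\times(r-1)$ diagonal matrix with nonzero diagonal entries, $U=\begin{pmatrix}u&U_1\end{pmatrix}\in\mathbb R^{n\times r}$ with $U^TU=I_r$, $B\in\mathbb R_+^{n\times r}$, and $C\in\mathbb R_+^{r\times r}$ is symmetric. Then there exists an invertible $T\in\mathbb R^{r\times r}$ whose first column is entrywise nonnegative and such that the first row of $T^{-1}$ is entrywise nonnegative, with $B=UT^{-1}$ and $C=T(\lambda_1\oplus D_1)T^T$. If moreover $A$ is irreducible, then the first column of $T$ and the first row of $T^{-1}$ are entrywise positive.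
   Context: $\mathcal S_n^+$ is the set of $n\times n$ symmetric entrywise nonnegative real matrices; $\mathbb R_+^{p\times q}$ the entrywise nonnegative $p\times q$ real matrices. The SNT-rank $\operatorname{st}_+(A)$ of $A\in\mathcal S_n^+$ is the minimal $k$ such that $A=BCB^T$ with $B\in\mathbb R_+^{n\times k}$ and $C\in\mathcal S_k^+$. $\mathcal E_n=\{A\in\mathcal S_n^+:\operatorname{rk}(A)=\operatorname{st}_+(A)\}$. The Perron eigenvalue is the spectral radius $\lambda_1$ of $A$, and a normalised Perron eigenvector is an entrywise nonnegative eigenvector $u$ for $\lambda_1$ with $u^Tu=1$. For matrices $X,Y$, $X\oplus Y=\begin{pmatrix}X&0\\0&Y\end{pmatrix}$. *)

(* Defs.v *)
From mathcomp Require Import all_boot all_order all_algebra.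
From mathcomp Require Import reals.
Set Implicit Arguments. Unset Strict Implicit. Unset Printing Implicit Defensive.
Import Order.TTheory GRing.Theory Num.Theory.
Local Open Scope ring_scope.

Section Defs.
Variable R : realType.

Definition nonneg_mx (p q : nat) (M : 'M[R]_(p, q)) : Prop :=
  forall i j, 0 <= M i j.

Definition sym_mx (k : nat) (M : 'M[R]_k) : Prop := M^T = M.

Definition SNN (n : nat) (A : 'M[R]_n) : Prop := nonneg_mx A /\ sym_mx A.

Definition snt_fact (n k : nat) (A : 'M[R]_n) : Prop :=
  exists (B : 'M[R]_(n, k)) (C : 'M[R]_k),
    nonneg_mx B /\ SNN C /\ A = B *m C *m B^T.

Definition snt_rank_is (n : nat) (A : 'M[R]_n) (k : nat) : Prop :=
  snt_fact k A /\ forall k', snt_fact k' A -> (k <= k')%N.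

Definition in_E (n : nat) (A : 'M[R]_n) : Prop :=
  SNN A /\ snt_rank_is A (\rank A).

(* Perron eigenvalue = spectral radius: an eigenvalue dominating the
   absolute value of every eigenvalue (A symmetric: all eigenvalues real) *)
Definition perron_eigenvalue (n : nat) (A : 'M[R]_n) (l : R) : Prop :=
  eigenvalue A l /\ forall mu, eigenvalue A mu -> `|mu| <= l.

Definition normalised_perron_vector (n : nat) (A : 'M[R]_n) (l : R)
  (u : 'cV[R]_n) : Prop :=
  nonneg_mx u /\ A *m u = l *: u /\ u^T *m u = 1%:M.

Definition irreducible_mx (n : nat) (A : 'M[R]_n) : Prop :=
  forall S : {set 'I_n}, S != set0 -> S != setT ->
    exists i j, [/\ i \in S, j \notin S & A i j != 0].

Definition dsum_mx (p q : nat) (X : 'M[R]_p) (Y : 'M[R]_q) : 'M[R]_(p + q) :=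
  block_mx X 0 0 Y.

End Defs.

(* Main.v *)
Require Import Defs.
From mathcomp Require Import all_boot all_order all_algebra.
From mathcomp Require Import reals.
Import Order.TTheory GRing.Theory Num.Theory.
Local Open Scope ring_scope.

Theorem mainTheorem10 (R : realType) (n r' : nat) (A : 'M[R]_n)
  (lambda1 : R) (u : 'cV[R]_n) (U1 : 'M[R]_(n, r')) (D1 : 'M[R]_r')
  (B : 'M[R]_(n, 1 + r')) (C : 'M[R]_(1 + r')) :
  in_E A -> A != 0 -> \rank A = (1 + r')%N -> snt_rank_is A (1 + r')%N ->
  perron_eigenvalue A lambda1 -> normalised_perron_vector A lambda1 u ->
  is_diag_mx D1 -> (forall i, D1 i i != 0) ->
  (row_mx u U1)^T *m row_mx u U1 = 1%:M ->
  A = row_mx u U1 *m dsum_mx (lambda1%:M : 'M[R]_1) D1 *m (row_mx u U1)^T ->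
  nonneg_mx B -> nonneg_mx C -> sym_mx C ->
  A = B *m C *m B^T ->
  exists T : 'M[R]_(1 + r'),
    T \in unitmx /\
    (forall i, 0 <= T i (lshift r' ord0)) /\
    (forall j, 0 <= invmx T (lshift r' ord0) j) /\
    B = row_mx u U1 *m invmx T /\
    C = T *m dsum_mx (lambda1%:M : 'M[R]_1) D1 *m T^T /\
    (irreducible_mx A ->
           (forall i, 0 < T i (lshift r' ord0)) /\
           (forall j, 0 < invmx T (lshift r' ord0) j)).
Proof.
move=> [[nnA symA] _] _ rkA _ [eigl perl] [nnu [Au uu]] _ _ UU AU nnB nnC _ AB.
set U := row_mx u U1 in UU AU *.
set L := dsum_mx _ D1 in AU *.
set S := U^T *m B.
have LS : L = S *m C *m S^T.
  have -> : L = U^T *m A *m U by rewrite AU !mulmxA UU mul1mx -mulmxA UU mulmx1.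
  by rewrite AB /S trmx_mul trmxK !mulmxA.
have Lu : L \in unitmx.
  have h : (\rank A <= \rank L)%N.
    by rewrite AU; exact: leq_trans (mxrankM_maxl _ _) (mxrankM_maxr _ _).
  by rewrite -row_free_unit /row_free eqn_leq rank_leq_row /= -{1}rkA.
have [Su Cu] : S \in unitmx /\ C \in unitmx.
  by move: Lu; rewrite LS !unitmx_mul unitmx_tr => /andP[/andP[-> ->] _].
have l0 : 0 <= lambda1.
  by apply: le_trans (normr_ge0 lambda1) (perl _ eigl).
have ln0 : lambda1 != 0.
  move: Lu; rewrite unitmxE /L /dsum_mx det_ublock det_scalar1 unitfE.
  by apply: contra => /eqP ->; rewrite mul0r.
have lp : 0 < lambda1 by rewrite lt_def ln0 l0.
have StT : B^T *m U = S^T by rewrite /S trmx_mul trmxK.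
have StU : S^T \in unitmx by rewrite unitmx_tr.
set P := 1%:M - U *m U^T.
have PU : P *m U = 0 by rewrite /P mulmxBl mul1mx -mulmxA UU mulmx1 subrr.
have PBC : P *m B *m C = 0.
  rewrite -[P *m B *m C]mulmx1 -(mulmxV StU) -StT !mulmxA.
  have -> : P *m B *m C *m B^T = P *m A by rewrite AB !mulmxA.
  by rewrite AU !mulmxA PU !mul0mx.
have PB : P *m B = 0.
  by rewrite -[P *m B]mulmx1 -(mulmxV Cu) mulmxA PBC mul0mx.
have BUS : B = U *m S.
  by apply/eqP; rewrite -subr_eq0 -{1}[B]mul1mx /S mulmxA -mulmxBl PB.
have S0 : forall j, S (lshift r' ord0) j = \sum_k u k ord0 * B k j.
  move=> j; rewrite /S mxE; apply: eq_bigr => k _.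
  by rewrite mxE /U row_mxEl.
have S0ge : forall j, 0 <= S (lshift r' ord0) j.
  by move=> j; rewrite S0; apply: sumr_ge0 => k _; apply: mulr_ge0.
set T := invmx S.
have TL : T *m L = C *m S^T by rewrite LS /T !mulmxA -(mulmxA (invmx S)) -/S mulVmx // mul1mx.
have TL0 : forall i, lambda1 * T i (lshift r' ord0) = \sum_j C i j * S (lshift r' ord0) j.
  move=> i.
  have e1 : (T *m L) i (lshift r' ord0) = lambda1 * T i (lshift r' ord0).
    rewrite -{1}[T]hsubmxK /L /dsum_mx mul_row_block !mulmx0 addr0 mul_mx_scalar.
    by rewrite row_mxEl !mxE.
  rewrite -e1 TL mxE; apply: eq_bigr => j _; by rewrite mxE.
have Tge : forall i, 0 <= T i (lshift r' ord0).
  move=> i; rewrite -(pmulr_rge0 _ lp) TL0.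
  by apply: sumr_ge0 => j _; apply: mulr_ge0.
exists T; split; first by rewrite unitmx_inv.
split; first exact: Tge.
split; first by move=> j; rewrite /T invmxK; exact: S0ge.
split; first by rewrite /T invmxK.
split.
  rewrite /T trmx_inv LS !mulmxA -(mulmxA (invmx S)) -/S mulVmx // mul1mx.
  by rewrite -mulmxA mulmxV ?unitmx_tr // mulmx1.
move=> irr.
have upos : forall k, 0 < u k ord0.
  set Z := [set k | u k ord0 == 0].
  case: (eqVneq Z set0) => [Z0|Zn0].
    move=> k; rewrite lt_def nnu andbT; apply/negP => h.
    have : k \in Z by rewrite inE.
    by rewrite Z0 inE.
  exfalso.
  case: (eqVneq Z setT) => [ZT|ZnT].
    have := congr1 (fun M : 'M[R]_1 => M ord0 ord0) uu => /=.
    rewrite !mxE big1 ?eqxx ?mulr1n => [/eqP|k _]; first by rewrite eq_sym oner_eq0.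
    have : k \in Z by rewrite ZT inE.
    by rewrite inE mxE => /eqP ->; rewrite mul0r.
  have [i [j [iZ jZ Aij]]] := irr Z Zn0 ZnT.
  have := congr1 (fun M : 'cV[R]_n => M i ord0) Au => /=.
  move: iZ; rewrite inE => /eqP iZ.
  rewrite mxE [in RHS]mxE iZ mulr0 => /psumr_eq0P h.
  have := h (fun k _ => mulr_ge0 (nnA i k) (nnu k ord0)) j isT.
  move/eqP; rewrite mulf_eq0 (negbTE Aij) /=.
  by move: jZ; rewrite inE => /negbTE ->.
have S0pos : forall j, 0 < S (lshift r' ord0) j.
  move=> j; rewrite lt_def S0ge andbT; apply/negP => /eqP h.
  have Bj : forall k, B k j = 0.
    move=> k; move: h; rewrite S0 => /psumr_eq0P h.
    have := h (fun l _ => mulr_ge0 (nnu l ord0) (nnB l j)) k isT.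
    by move/eqP; rewrite mulf_eq0 gt_eqF ?upos //= => /eqP.
  have := congr1 (fun M : 'M[R]_(1 + r') => M j j) (mulVmx Su) => /=.
  rewrite !mxE eqxx big1 => [/eqP|k _]; first by rewrite eq_sym oner_eq0.
  by rewrite /S mxE big1 ?mulr0 // => l _; rewrite Bj mulr0.
split; last by move=> j; rewrite /T invmxK; exact: S0pos.
move=> i; rewrite -(pmulr_rgt0 _ lp) TL0 lt_def; apply/andP; split; last first.
  by apply: sumr_ge0 => j _; apply: mulr_ge0.
apply/negP => /eqP /psumr_eq0P h.
have Ci : forall j, C i j = 0.
  move=> j; have := h (fun l _ => mulr_ge0 (nnC i l) (S0ge l)) j isT.
  by move/eqP; rewrite mulf_eq0 (gt_eqF (S0pos j)) orbF => /eqP.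
have := congr1 (fun M : 'M[R]_(1 + r') => M i i) (mulmxV Cu) => /=.
rewrite !mxE eqxx big1 => [/eqP|k _]; first by rewrite eq_sym oner_eq0.
by rewrite Ci mul0r.
Qed.
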